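(* Let $n>2k$ be integers and let $A\in\mathscr F_k^5$ satisfy, for all $\alpha\in\mathscr I_{k-1}^5$, $$(n+2k-4\alpha_3-4)A_{\alpha+\vec e_3}=(n+2k-4\alpha_4-4)A_{\alpha+\vec e_4},$$ $$(n+2k-4\alpha_5-4)A_{\alpha+\vec e_5}=(n+2k-4\alpha_1-4)A_{\alpha+\vec e_1},$$ $$(n+2k-4\alpha_3-4)A_{\alpha+\vec e_3}=(n+2k-4\alpha_1-4)A_{\alpha+\vec e_1}-4(\alpha_1-\alpha_3-\alpha_4+\alpha_5)A_{\alpha+\vec e_2}.$$ Then for all $\alpha\in\mathscr I_k^5$: $$A_{\alpha_1,\alpha_2,\alpha_3,\alpha_4,\alpha_5}=A_{\alpha_1,\alpha_2,\alpha_4,\alpha_3,\alpha_5},\quad A_{\alpha_1,\alpha_2,\alpha_3,\alpha_4,\alpha_5}=A_{\alpha_5,\alpha_2,\alpha_3,\alpha_4,\alpha_1},\quad A_{\alpha_1,\alpha_2,\alpha_3,\alpha_4,\alpha_5}=A_{\alpha_3,\alpha_2,\alpha_1,\alpha_5,\alpha_4}.$$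
   Context: Notation: $\mathscr I_k^\ell:=\{\alpha\in\mathbb N_0^\ell:\alpha_1+\cdots+\alpha_\ell=k\}$; $\mathscr F_k^\ell$ is the real vector space of functions $A:\mathscr I_k^\ell\to\mathbb R$, $A_\alpha:=A(\alpha)$; $\vec e_j\in\mathbb N_0^\ell$ is the tuple with $1$ in slot $j$ and $0$ elsewhere. *)

(* Defs.v *)
From Stdlib Require Import Reals Lra Lia.
Open Scope R_scope.

(* An element A of F_k^5 is modelled as a real-valued function of the five
   coordinates alpha_1..alpha_5; only its values on tuples with
   alpha_1+...+alpha_5 = k (i.e. on I_k^5) are ever used. *)
Definition F5 := nat -> nat -> nat -> nat -> nat -> R.

Definition coef (n k a : nat) : R := INR n + 2 * INR k - 4 * INR a - 4.

(* Main.v *)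
Require Import Defs.
From Stdlib Require Import Reals Lra Lia.
Open Scope R_scope.

Fixpoint PP (n k m : nat) : R :=
  match m with 0%nat => 1 | S j => PP n k j * coef n k j end.

Lemma coef_pos n k j : (2 * k < n)%nat -> (j < k)%nat -> 0 < coef n k j.
Proof.
  intros H1 H2. unfold coef.
  assert (INR (2*k) < INR n) by (apply lt_INR; lia).
  assert (INR (S j) <= INR k) by (apply le_INR; lia).
  rewrite mult_INR, S_INR in *. simpl in *. lra.
Qed.

Lemma PP_pos n k m : (2 * k < n)%nat -> (m <= k)%nat -> 0 < PP n k m.
Proof.
  intros H. induction m; simpl; intros; [lra|].
  apply Rmult_lt_0_compat; [apply IHm; lia | apply coef_pos; lia].
Qed.

Definition Hyp (n k : nat) (A : F5) :=
  (forall a1 a2 a3 a4 a5 : nat, (a1 + a2 + a3 + a4 + a5 + 1 = k)%nat ->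
     coef n k a3 * A a1 a2 (S a3) a4 a5 = coef n k a4 * A a1 a2 a3 (S a4) a5 /\
     coef n k a5 * A a1 a2 a3 a4 (S a5) = coef n k a1 * A (S a1) a2 a3 a4 a5 /\
     coef n k a3 * A a1 a2 (S a3) a4 a5 =
       coef n k a1 * A (S a1) a2 a3 a4 a5
       - 4 * (INR a1 - INR a3 - INR a4 + INR a5) * A a1 (S a2) a3 a4 a5).

Definition D n k (A : F5) a1 a2 a3 a4 a5 :=
  A a1 a2 a3 a4 a5 * (PP n k a1 * PP n k a3 * PP n k a4 * PP n k a5).

Lemma D34 n k A : Hyp n k A -> forall a3 a1 a2 a4 a5,
  (a1 + a2 + a3 + a4 + a5 = k)%nat ->
  D n k A a1 a2 a3 a4 a5 = D n k A a1 a2 0 (a3 + a4) a5.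
Proof.
  intros H. induction a3; intros a1 a2 a4 a5 Hs; [reflexivity|].
  assert (E : D n k A a1 a2 (S a3) a4 a5 = D n k A a1 a2 a3 (S a4) a5).
  { destruct (H a1 a2 a3 a4 a5 ltac:(lia)) as [h1 _].
    unfold D; simpl.
    transitivity ((coef n k a3 * A a1 a2 (S a3) a4 a5) *
      (PP n k a1 * PP n k a3 * PP n k a4 * PP n k a5)); [ring|].
    rewrite h1; ring. }
  rewrite E, IHa3 by lia. replace (a3 + S a4)%nat with (S a3 + a4)%nat by lia.
  reflexivity.
Qed.

Lemma D51 n k A : Hyp n k A -> forall a1 a2 a3 a4 a5,
  (a1 + a2 + a3 + a4 + a5 = k)%nat ->
  D n k A a1 a2 a3 a4 a5 = D n k A 0 a2 a3 a4 (a1 + a5).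
Proof.
  intros H. induction a1; intros a2 a3 a4 a5 Hs; [reflexivity|].
  assert (E : D n k A (S a1) a2 a3 a4 a5 = D n k A a1 a2 a3 a4 (S a5)).
  { destruct (H a1 a2 a3 a4 a5 ltac:(lia)) as [_ [h2 _]].
    unfold D; simpl.
    transitivity ((coef n k a1 * A (S a1) a2 a3 a4 a5) *
      (PP n k a1 * PP n k a3 * PP n k a4 * PP n k a5)); [ring|].
    rewrite <- h2; ring. }
  rewrite E, IHa1 by lia. replace (a1 + S a5)%nat with (S a1 + a5)%nat by lia.
  reflexivity.
Qed.

Definition G n k A s t := D n k A 0 (k - s - t) 0 t s.

Lemma DG n k A : Hyp n k A -> forall a1 a2 a3 a4 a5,
  (a1 + a2 + a3 + a4 + a5 = k)%nat ->
  D n k A a1 a2 a3 a4 a5 = G n k A (a1 + a5) (a3 + a4).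
Proof.
  intros H a1 a2 a3 a4 a5 Hs.
  rewrite (D34 n k A H) by lia. rewrite (D51 n k A H) by lia.
  unfold G. replace (k - (a1 + a5) - (a3 + a4))%nat with a2 by lia.
  reflexivity.
Qed.

Lemma Grec n k A : Hyp n k A -> forall s t, (s + t < k)%nat ->
  G n k A s (S t) = G n k A (S s) t - 4 * (INR s - INR t) * G n k A s t.
Proof.
  intros H s t Hst.
  set (a2 := (k - s - t - 1)%nat).
  assert (E1 : G n k A s (S t) = D n k A s a2 1 t 0).
  { rewrite (DG n k A H) by (unfold a2; lia).
    replace (s + 0)%nat with s by lia. reflexivity. }
  assert (E2 : G n k A (S s) t = D n k A (S s) a2 0 t 0).
  { rewrite (DG n k A H) by (unfold a2; lia).
    replace (S s + 0)%nat with (S s) by lia. reflexivity. }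
  assert (E3 : G n k A s t = D n k A s (S a2) 0 t 0).
  { rewrite (DG n k A H) by (unfold a2; lia).
    replace (s + 0)%nat with s by lia. reflexivity. }
  rewrite E1, E2, E3.
  destruct (H s a2 0%nat t 0%nat ltac:(unfold a2; lia)) as [_ [_ h3]].
  unfold D; simpl.
  transitivity ((coef n k 0%nat * A s a2 1%nat t 0%nat) * (PP n k s * PP n k t)); [ring|].
  rewrite h3. rewrite INR_0. ring.
Qed.

Lemma Gsym n k A : Hyp n k A -> forall m, (m <= k)%nat ->
  forall s t, (s + t = m)%nat -> G n k A s t = G n k A t s.
Proof.
  intros H. induction m; intros Hm s t Hst.
  { assert (s = 0%nat) by lia. assert (t = 0%nat) by lia. subst. reflexivity. }
  assert (IH := IHm ltac:(lia)).
  assert (Q : forall d, (forall u, (u + (u + d) = S m)%nat ->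
                 G n k A u (u + d) = G n k A (u + d) u) /\
                (forall u, (u + (u + S d) = S m)%nat ->
                 G n k A u (u + S d) = G n k A (u + S d) u)).
  { induction d.
    - split; intros u Hu.
      + rewrite Nat.add_0_r. reflexivity.
      + replace (u + 1)%nat with (S u) by lia.
        rewrite (Grec n k A H) by lia. ring.
    - destruct IHd as [IHd0 IHd]. split; [exact IHd|].
      intros u Hu.
      assert (I1 := IHd0 (S u) ltac:(lia)).
      replace (S u + d)%nat with (u + S d)%nat in I1 by lia.
      replace (u + S (S d))%nat with (S (u + S d)) in * by lia.
      assert (Sy := IH u (u + S d)%nat ltac:(lia)).
      rewrite (Grec n k A H) by lia.
      rewrite I1, Sy.
      rewrite (Grec n k A H (u + S d)%nat u) by lia.
      ring. }
  destruct (Nat.le_gt_cases s t).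
  - replace t with (s + (t - s))%nat by lia. apply (proj1 (Q _)). lia.
  - replace s with (t + (s - t))%nat by lia. symmetry. apply (proj1 (Q _)). lia.
Qed.

Lemma Dinj n k A a1 a2 a3 a4 a5 b1 b2 b3 b4 b5 :
  (2 * k < n)%nat -> (a1 <= k)%nat -> (a3 <= k)%nat -> (a4 <= k)%nat -> (a5 <= k)%nat ->
  PP n k a1 * PP n k a3 * PP n k a4 * PP n k a5 =
  PP n k b1 * PP n k b3 * PP n k b4 * PP n k b5 ->
  D n k A a1 a2 a3 a4 a5 = D n k A b1 b2 b3 b4 b5 ->
  A a1 a2 a3 a4 a5 = A b1 b2 b3 b4 b5.
Proof.
  intros Hn h1 h3 h4 h5 Hp HD. unfold D in HD. rewrite <- Hp in HD.
  apply Rmult_eq_reg_r in HD; auto.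
  assert (0 < PP n k a1 * PP n k a3 * PP n k a4 * PP n k a5).
  { repeat apply Rmult_lt_0_compat; apply PP_pos; auto. }
  lra.
Qed.

Theorem lemma4p1 (n k : nat) (A : F5) :
  (2 * k < n)%nat ->
  (forall a1 a2 a3 a4 a5 : nat, (a1 + a2 + a3 + a4 + a5 + 1 = k)%nat ->
     coef n k a3 * A a1 a2 (S a3) a4 a5 = coef n k a4 * A a1 a2 a3 (S a4) a5 /\
     coef n k a5 * A a1 a2 a3 a4 (S a5) = coef n k a1 * A (S a1) a2 a3 a4 a5 /\
     coef n k a3 * A a1 a2 (S a3) a4 a5 =
       coef n k a1 * A (S a1) a2 a3 a4 a5
       - 4 * (INR a1 - INR a3 - INR a4 + INR a5) * A a1 (S a2) a3 a4 a5) ->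
  forall a1 a2 a3 a4 a5 : nat, (a1 + a2 + a3 + a4 + a5 = k)%nat ->
    A a1 a2 a3 a4 a5 = A a1 a2 a4 a3 a5 /\
    A a1 a2 a3 a4 a5 = A a5 a2 a3 a4 a1 /\
    A a1 a2 a3 a4 a5 = A a3 a2 a1 a5 a4.
Proof.
  intros Hn H0 a1 a2 a3 a4 a5 Hs.
  assert (H : Hyp n k A) by exact H0.
  split; [|split]; apply (Dinj n k A); try lia; try ring;
    rewrite !(DG n k A H) by lia.
  - rewrite (Nat.add_comm a4 a3). reflexivity.
  - rewrite (Nat.add_comm a5 a1). reflexivity.
  - apply (Gsym n k A H (a1 + a5 + (a3 + a4))); lia.
Qed.
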